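(* For every finite alphabet $\Sigma$, every word $x\in\Sigma^*$ and every $\varepsilon>0$, there is a 3-state AfA that accepts $x$ with probability $1$ and accepts every word $z\in\Sigma^*$ with $z\neq x$ with probability at most $\varepsilon$.
   Context: An $n$-state affine finite automaton (AfA) over $\Sigma$ consists of real $n\times n$ matrices $A_\sigma$ for $\sigma\in\Sigma\cup\{\$\}$ ($\$$ a right end-marker), each of whose columns sums to $1$; an initial vector $v_0\in\mathbb{R}^n$ with entries summing to $1$; and a set $E_a$ of accepting states. On input $w=w_1\cdots w_k$ the final vector is $v_f=A_\$A_{w_k}\cdots A_{w_1}v_0$, and $w$ is accepted with probability $\sum_{j\in E_a}|v_f[j]|\big/\sum_{j=1}^n|v_f[j]|$. *)

(* Defs.v *)
From HB Require Import structures.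
From mathcomp Require Import all_boot all_order all_algebra.
Set Implicit Arguments. Unset Strict Implicit. Unset Printing Implicit Defensive.
Import Order.TTheory GRing.Theory Num.Theory.
Local Open Scope ring_scope.

Record AfA (R : realFieldType) (Sigma : finType) (n : nat) := MkAfA {
  afa_mx : Sigma -> 'M[R]_n;
  afa_end : 'M[R]_n;
  afa_init : 'cV[R]_n;
  afa_acc : {set 'I_n}
}.

Definition col_stochastic_affine (R : realFieldType) n (A : 'M[R]_n) : Prop :=
  forall j : 'I_n, \sum_(i < n) A i j = 1.

Definition wf_AfA (R : realFieldType) (Sigma : finType) n (M : AfA R Sigma n) : Prop :=
  (forall s : Sigma, col_stochastic_affine (afa_mx M s)) /\
  col_stochastic_affine (afa_end M) /\
  \sum_(i < n) afa_init M i 0 = 1.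

Definition afa_final (R : realFieldType) (Sigma : finType) n (M : AfA R Sigma n)
  (w : seq Sigma) : 'cV[R]_n :=
  afa_end M *m foldl (fun v s => afa_mx M s *m v) (afa_init M) w.

Definition afa_accept_prob (R : realFieldType) (Sigma : finType) n (M : AfA R Sigma n)
  (w : seq Sigma) : R :=
  let vf := afa_final M w in
  (\sum_(j in afa_acc M) `|vf j 0|) / (\sum_(j < n) `|vf j 0|).

(* Main.v *)
Require Import Defs.
From HB Require Import structures.
From mathcomp Require Import all_boot all_order all_algebra.
From mathcomp Require Import ring lra.
Import Order.TTheory GRing.Theory Num.Theory.
Local Open Scope ring_scope.

Lemma natdist (R : realFieldType) (m n : nat) : m <> n -> 1 <= `|m%:R - n%:R : R|.
Proof.
move=> Hne; case: (ltngtP m n) => H.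
- rewrite distrC -natrB; last exact: ltnW.
  rewrite ger0_norm ?ler0n // ler1n subn_gt0 //.
- rewrite -natrB; last exact: ltnW.
  rewrite ger0_norm ?ler0n // ler1n subn_gt0 //.
- by case: Hne.
Qed.

Section S.
Variables (R : realFieldType) (Sigma : finType).

Definition kk : nat := #|Sigma|.+1.
Definition dd (s : Sigma) : nat := (enum_rank s).+1.
Definition gg (w : seq Sigma) : nat := foldl (fun n s => n * kk + dd s)%N 0%N w.

Definition mkM (e : nat -> nat -> R) : 'M[R]_3 := \matrix_(i, j) e (i : nat) (j : nat).
Definition vec (F : R) : 'cV[R]_3 :=
  \col_i (if (i : nat) == 0%N then F else if (i : nat) == 1%N then 1 - F else 0).

Definition letM (s : Sigma) : 'M[R]_3 := mkM (fun i j =>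
  match i, j with
  | 0%N, 0%N => (kk + dd s)%:R | 0, 1 => (dd s)%:R
  | 1, 0 => 1 - (kk + dd s)%:R | 1, 1 => 1 - (dd s)%:R
  | 2, 2 => 1 | _, _ => 0 end).

Definition endM (K c : R) : 'M[R]_3 := mkM (fun i j =>
  match i, j with
  | 0, 0 => 1 | 0, 1 => 1
  | 1, 0 => K - K * c | 1, 1 => - (K * c)
  | 2, 0 => - (K - K * c) | 2, 1 => K * c | 2, 2 => 1 | _, _ => 0 end).

Lemma mul3 (A : 'M[R]_3) (v : 'cV[R]_3) i :
  (A *m v) i 0 = A i 0 * v 0 0 + A i 1 * v 1 0 + A i 2%:R * v 2%:R 0.
Proof.
rewrite mxE !big_ord_recl big_ord0 addr0 addrA.
by congr (A i _ * v _ 0 + A i _ * v _ 0 + A i _ * v _ 0); apply/val_inj.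
Qed.

Lemma sum3 (f : 'I_3 -> R) : \sum_(i < 3) f i = f 0 + f 1 + f 2%:R.
Proof.
rewrite !big_ord_recl big_ord0 addr0 addrA.
by congr (f _ + f _ + f _); apply/val_inj.
Qed.

Lemma colsum_mkM e : (forall j, (j < 3)%N -> e 0%N j + e 1%N j + e 2%N j = 1) ->
  col_stochastic_affine (mkM e).
Proof. move=> H j; rewrite sum3 !mxE; exact: H. Qed.

Lemma step_vec s (F : R) : letM s *m vec F = vec (F * kk%:R + (dd s)%:R).
Proof.
apply/matrixP => i j; rewrite (ord1 j) mul3 !mxE /=.
case: i => [[|[|[|i]]] Hi] //=; ring.
Qed.

Lemma fold_vec w : foldl (fun v s => letM s *m v) (vec 0) w = vec (gg w)%:R.
Proof.
elim/last_ind: w => [|w s IH]; first by [].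
by rewrite /gg !foldl_rcons -/(gg w) IH step_vec natrD natrM.
Qed.

Lemma gg_inj w1 w2 : gg w1 = gg w2 -> w1 = w2.
Proof.
elim/last_ind: w1 w2 => [|w1 s1 IH] w2; case/lastP: w2 => [|w2 s2] //;
  rewrite /gg ?foldl_rcons /dd //= -/(gg _).
- by rewrite addnS.
- by rewrite addnS.
move=> E.
have Hd : forall s : Sigma, ((enum_rank s).+1 < kk)%N.
  by move=> s; rewrite /kk ltnS; exact: ltn_ord.
have := congr1 (modn^~ kk) E; rewrite !modnMDl !modn_small ?Hd // => /eqP.
rewrite eqSS => /eqP/val_inj/enum_rank_inj es; subst s2.
move/eqP: E; rewrite eqn_add2r eqn_mul2r /kk /= => /eqP E.
by rewrite (IH w2 E).
Qed.

End S.
Arguments gg {Sigma}. Arguments vec {R}. Arguments endM {R}. Arguments letM {R Sigma}.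

Theorem mainTheorem11 (R : realFieldType) (Sigma : finType) (x : seq Sigma)
  (eps : R) (heps : 0 < eps) :
  exists M : AfA R Sigma 3,
    wf_AfA M /\
    afa_accept_prob M x = 1 /\
    (forall z : seq Sigma, z <> x -> afa_accept_prob M z <= eps).
Proof.
pose c : R := (gg x)%:R.
exists (MkAfA (@letM R Sigma) (endM eps^-1 c) (vec 0) [set ord0]).
have fin : forall w, afa_final (MkAfA (@letM R Sigma) (endM eps^-1 c) (vec 0) [set ord0]) w
   = \col_i (if (i : nat) == 0%N then 1 else if (i : nat) == 1%N then eps^-1 * ((gg w)%:R - c)
             else - (eps^-1 * ((gg w)%:R - c))).
  move=> w; rewrite /afa_final /= fold_vec.
  apply/matrixP => i j; rewrite (ord1 j) mul3 !mxE /=.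
  case: i => [[|[|[|i]]] Hi] //=; ring.
have prob : forall w, afa_accept_prob (MkAfA (@letM R Sigma) (endM eps^-1 c) (vec 0) [set ord0]) w
   = 1 / (1 + 2%:R * (eps^-1 * `|(gg w)%:R - c|)).
  move=> w; rewrite /afa_accept_prob fin big_set1 sum3 !mxE /= normrN normrM.
  have ie : 0 <= eps^-1 by rewrite invr_ge0 ltW.
  rewrite normr1 (ger0_norm ie); congr (_ / _); ring.
split; [split; [|split]|split].
- move=> s; apply: colsum_mkM => j.
  case: j => [|[|[|j]]] //= _; ring.
- apply: colsum_mkM => j; case: j => [|[|[|j]]] //= _; ring.
- by rewrite sum3 !mxE /=; ring.
- by rewrite prob /c subrr normr0 !mulr0 addr0 divr1.
move=> z Hz; rewrite prob.
have HD : 1 <= `|(gg z)%:R - c|.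
  by apply: natdist => /gg_inj.
set D := `|_| in HD *.
have ie : 0 < eps^-1 by rewrite invr_gt0.
have h1 : 0 < 1 + 2%:R * (eps^-1 * D) by nra.
rewrite ler_pdivrMr //.
have -> : eps * (1 + 2%:R * (eps^-1 * D)) = eps + 2%:R * D * (eps * eps^-1) by ring.
have e1 : eps * eps^-1 = 1 by apply: mulfV; rewrite gt_eqF.
rewrite e1 mulr1.
have h2 : 0 <= D * 2%:R by rewrite mulr_ge0 // (le_trans ler01 HD).
rewrite (mulrC 2%:R); apply: ler_wpDl; first exact: ltW.
rewrite mulr_natr mulr2n.
apply: (le_trans HD); rewrite lerDl; exact: (le_trans ler01 HD).
Qed.
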